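(* Under the Gaussian tile model described in the context, with the location $X$ uniformly distributed a priori on $[L]$, the maximum likelihood location estimate is given by minimizing the norm induced by a generalized inner product: $$\hat{\ell}_{\mathrm{GIP}_{2D}}=\operatorname*{arg\,min}_{\ell\in[L]}\big\|\vec{\mathbf{y}}-\vec{\mathbf{y}}^\ell\big\|_{\mathbf{G}},$$ where $\|\mathbf v\|_{\mathbf G}=\sqrt{\mathbf v^{\top}\mathbf G\mathbf v}$ and $\mathbf{G}$ is the $N_wN_d\times N_wN_d$ diagonal matrix with $$\mathbf{G}_{k+(j-1)N_w,\,k+(j-1)N_w}=\frac{1}{2\sigma_i^2+N_0/\tilde A_{k,j}},\qquad k\in[N_w],\ j\in[N_d].$$
   Context: Setting: each image is a matrix of $N_w\times N_d$ tiles; for a matrix $\mathbf Y$, its column-wise vectorization $\vec{\mathbf y}\in\mathbb R^{N_wN_d}$ has $\vec y_{k+(j-1)N_w}=y_{k,j}$. The captured image is $Y_{k,j}=a_{k,j}+n^i_{k,j}+n^s_{k,j}$, where $a_{k,j}$ is the road signal, $n^i_{k,j}\sim\mathcal N(0,\sigma_i^2)$ is intrinsic noise and $n^s_{k,j}\sim\mathcal N(0,N_0/\tilde A_{k,j})$ is sensor noise, with $\sigma_i^2>0$, $N_0>0$, and $\tilde A_{k,j}>0$ the area of the projection of road tile $(k,j)$ onto the camera's focal plane. The $\ell$-th global map section ($\ell\in[L]$) is $Y^\ell_{k,j}=a^\ell_{k,j}+n^{i,\ell}_{k,j}$ with $n^{i,\ell}_{k,j}\sim\mathcal N(0,\sigma_i^2)$;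 if the true location is $\ell$ then $a_{k,j}=a^\ell_{k,j}$ for all tiles. All noises are independent across tiles and of one another. Conditional on $X=\ell$, the captured image depends on the map only through $\mathbf Y^\ell$, and given $Y^\ell_{k,j}=y^\ell_{k,j}$ the signal is modeled as $a^\ell_{k,j}\sim\mathcal N(y^\ell_{k,j},\sigma_i^2)$, independently across tiles. The maximum likelihood location estimate is the $\ell$ maximizing $\Pr(X=\ell\mid\mathbf Y=\mathbf y,\mathbf Y^l=\mathbf y^l, l\in[L])$. *)

(* Defs.v *)
From mathcomp Require Import all_boot all_order all_algebra.
From mathcomp Require Import all_classical all_reals all_analysis.
Set Implicit Arguments. Unset Strict Implicit. Unset Printing Implicit Defensive.
Import Order.TTheory GRing.Theory Num.Theory.
Local Open Scope ring_scope.

Section Defs.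
Variable R : realType.

(* Column-wise vectorization: for Y : 'M_(Nw,Nd), entry (k,j) (0-based) goes
   to index k + j*Nw, i.e. the 1-based index k + (j-1) Nw of the paper. *)
Definition vecc (Nw Nd : nat) (Y : 'M[R]_(Nw, Nd)) : 'cV[R]_(Nd * Nw) :=
  (mxvec Y^T)^T.

Definition Gweights (Nw Nd : nat) (sigma_i N0 : R) (At : 'M[R]_(Nw, Nd))
  : 'M[R]_(Nw, Nd) :=
  \matrix_(k, j) (sigma_i ^+ 2 *+ 2 + N0 / At k j)^-1.

Definition Gmat (Nw Nd : nat) (sigma_i N0 : R) (At : 'M[R]_(Nw, Nd))
  : 'M[R]_(Nd * Nw) :=
  diag_mx (vecc (Gweights sigma_i N0 At))^T.

Definition Gnorm (n : nat) (G : 'M[R]_n) (v : 'cV[R]_n) : R :=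
  Num.sqrt ((v^T *m G *m v) 0 0).

(* Conditional density of the captured tile value Y_{k,j} given the map tile
   Y^l_{k,j} = y^l_{k,j} and X = l: Y = a + n^i + n^s with
   a ~ N(y^l, sigma_i^2), n^i ~ N(0, sigma_i^2), n^s ~ N(0, N0/Atilde)
   independent, i.e. Y ~ N(y^l, 2 sigma_i^2 + N0/Atilde).
   (normal_pdf m s x takes the standard deviation s.) *)
Definition tile_lik (sigma_i N0 At yl y : R) : R :=
  normal_pdf yl (Num.sqrt (sigma_i ^+ 2 *+ 2 + N0 / At)) y.

(* Likelihood of location l: conditional density of the captured image given
   the map, X = l (depends on the map only through Y^l; tiles independent). *)
Definition likelihood (Nw Nd L : nat) (sigma_i N0 : R) (At : 'M[R]_(Nw, Nd))
  (y : 'M[R]_(Nw, Nd)) (ys : 'I_L -> 'M[R]_(Nw, Nd)) (l : 'I_L) : R :=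
  \prod_(k < Nw) \prod_(j < Nd) tile_lik sigma_i N0 (At k j) (ys l k j) (y k j).

Definition uniform_prior (L : nat) (l : 'I_L) : R := (L%:R)^-1.

Definition posterior (Nw Nd L : nat) (sigma_i N0 : R) (At : 'M[R]_(Nw, Nd))
  (y : 'M[R]_(Nw, Nd)) (ys : 'I_L -> 'M[R]_(Nw, Nd)) (l : 'I_L) : R :=
  uniform_prior l * likelihood sigma_i N0 At y ys l /
  \sum_(m < L) uniform_prior m * likelihood sigma_i N0 At y ys m.

Definition is_ML_estimate (Nw Nd L : nat) (sigma_i N0 : R)
  (At : 'M[R]_(Nw, Nd)) (y : 'M[R]_(Nw, Nd)) (ys : 'I_L -> 'M[R]_(Nw, Nd))
  (l : 'I_L) : Prop :=
  forall m : 'I_L, posterior sigma_i N0 At y ys m <= posterior sigma_i N0 At y ys l.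

End Defs.

(* Main.v *)
Require Import Defs.
From mathcomp Require Import all_boot all_order all_algebra.
From mathcomp Require Import all_classical all_reals all_analysis.
From mathcomp Require Import ring lra.
Import Order.TTheory GRing.Theory Num.Theory.
Local Open Scope ring_scope.

Section Aux.
Variable R : realType.

Definition Qf {Nw Nd : nat} (sigma_i N0 : R) (At : 'M[R]_(Nw, Nd))
  (y yl : 'M[R]_(Nw, Nd)) : R :=
  \sum_(k < Nw) \sum_(j < Nd) Gweights sigma_i N0 At k j * (y k j - yl k j) ^+ 2.

Lemma vecc_entry {Nw Nd : nat} (Y : 'M[R]_(Nw, Nd)) k j :
  vecc Y (mxvec_index j k) 0 = Y k j.
Proof. by rewrite /vecc mxE mxvecE mxE. Qed.

Lemma quad_eq (Nw Nd : nat) (sigma_i N0 : R) (At : 'M[R]_(Nw, Nd))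
  (y yl : 'M[R]_(Nw, Nd)) :
  ((vecc y - vecc yl)^T *m Gmat sigma_i N0 At *m (vecc y - vecc yl)) 0 0
  = Qf sigma_i N0 At y yl.
Proof.
rewrite /Gmat mul_mx_diag mxE.
rewrite (reindex (uncurry (@mxvec_index Nd Nw))) /=; last first.
  by have [g g1 g2] := @curry_mxvec_bij Nd Nw; exists g => x _; [apply: g1; rewrite inE | apply: g2; rewrite inE].
rewrite /Qf exchange_big pair_bigA /=.
apply: eq_bigr => -[j k] _ /=.
rewrite !mxE !mxvecE !mxE; rewrite expr2; ring.
Qed.

Lemma tile_eq (sigma_i N0 A yl yv : R) : 0 < sigma_i -> 0 < N0 -> 0 < A ->
  tile_lik sigma_i N0 A yl yv =
  normal_peak (Num.sqrt (sigma_i ^+ 2 *+ 2 + N0 / A)) *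
  expR (- ((sigma_i ^+ 2 *+ 2 + N0 / A)^-1 * (yv - yl) ^+ 2 / 2)).
Proof.
move=> hs hN hA.
have hv : 0 < sigma_i ^+ 2 *+ 2 + N0 / A.
  by apply: ltr_wpDr; [exact: divr_ge0 (ltW hN) (ltW hA) | rewrite pmulrn_lgt0 // exprn_gt0].
rewrite /tile_lik normal_pdfE; last by rewrite gt_eqF // sqrtr_gt0.
rewrite /normal_fun sqr_sqrtr ?(ltW hv) //; congr (_ * expR _).
have ha : 0 < sigma_i ^+ 2 by rewrite exprn_gt0.
rewrite -mulNr; field; rewrite gt_eqF // gt_eqF //; move: ha; set a := sigma_i ^+ 2 => ha; nra.
Qed.

Lemma lik_eq (Nw Nd L : nat) (sigma_i N0 : R) (At : 'M[R]_(Nw, Nd))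
  (y : 'M[R]_(Nw, Nd)) (ys : 'I_L -> 'M[R]_(Nw, Nd)) (l : 'I_L) :
  0 < sigma_i -> 0 < N0 -> (forall k j, 0 < At k j) ->
  likelihood sigma_i N0 At y ys l =
  (\prod_(k < Nw) \prod_(j < Nd) normal_peak (Num.sqrt (sigma_i ^+ 2 *+ 2 + N0 / At k j)))
  * expR (- (Qf sigma_i N0 At y (ys l) / 2)).
Proof.
move=> hs hN hA; rewrite /likelihood /Qf.
rewrite mulr_suml -sumrN expR_sum -big_split /=; apply: eq_bigr => k _.
rewrite mulr_suml -sumrN expR_sum -big_split /=; apply: eq_bigr => j _.
by rewrite tile_eq // /Gweights mxE.
Qed.
End Aux.
Arguments Qf {R Nw Nd}.
Theorem corollary1 (R : realType) (Nw Nd L : nat) (sigma_i N0 : R)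
  (At : 'M[R]_(Nw, Nd)) (y : 'M[R]_(Nw, Nd)) (ys : 'I_L -> 'M[R]_(Nw, Nd)) :
  0 < sigma_i -> 0 < N0 -> (forall k j, 0 < At k j) ->
  forall l : 'I_L,
    is_ML_estimate sigma_i N0 At y ys l <->
    (forall m : 'I_L,
       Gnorm (Gmat sigma_i N0 At) (vecc y - vecc (ys l))
       <= Gnorm (Gmat sigma_i N0 At) (vecc y - vecc (ys m))).
Proof.
move=> hs hN hA l.
have hv : forall k j, 0 < sigma_i ^+ 2 *+ 2 + N0 / At k j.
  move=> k j; have ha : 0 < sigma_i ^+ 2 by rewrite exprn_gt0.
  by apply: ltr_wpDr; [exact: divr_ge0 (ltW hN) (ltW (hA k j)) | rewrite pmulrn_lgt0].
have hQ : forall m, 0 <= Qf sigma_i N0 At y (ys m).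
  move=> m; apply: sumr_ge0 => k _; apply: sumr_ge0 => j _.
  by rewrite mulr_ge0 ?sqr_ge0 // /Gweights mxE invr_ge0 ltW.
set C := \prod_(k < Nw) \prod_(j < Nd) normal_peak (Num.sqrt (sigma_i ^+ 2 *+ 2 + N0 / At k j)).
have hC : 0 < C.
  apply: prodr_gt0 => k _; apply: prodr_gt0 => j _.
  by apply: normal_peak_gt0; rewrite gt_eqF // sqrtr_gt0.
have hlik : forall m, likelihood sigma_i N0 At y ys m = C * expR (- (Qf sigma_i N0 At y (ys m) / 2)).
  by move=> m; rewrite lik_eq.
have hL : (0 < L)%N by apply: leq_ltn_trans (ltn_ord l).
have hS : 0 < \sum_(m < L) uniform_prior R m * likelihood sigma_i N0 At y ys m.
  rewrite (bigD1 l) //=; apply: ltr_pwDl.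
    by rewrite /uniform_prior hlik mulr_gt0 ?invr_gt0 ?ltr0n // mulr_gt0 // expR_gt0.
  apply: sumr_ge0 => m _.
  by rewrite /uniform_prior hlik mulr_ge0 ?invr_ge0 ?ler0n // mulr_ge0 // ?expR_ge0 // ltW.
set S := \sum_(m < L) _ in hS.
have hc : 0 < (L%:R)^-1 / S by rewrite divr_gt0 // invr_gt0 ltr0n.
have hpost : forall m, posterior sigma_i N0 At y ys m = likelihood sigma_i N0 At y ys m * ((L%:R)^-1 / S).
  by move=> m; rewrite /posterior -/S /uniform_prior mulrA [_ * likelihood _ _ _ _ _ _]mulrC.
have key : forall m, (posterior sigma_i N0 At y ys m <= posterior sigma_i N0 At y ys l) =
   (Qf sigma_i N0 At y (ys l) <= Qf sigma_i N0 At y (ys m)).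
  move=> m; rewrite !hpost ler_pM2r // !hlik ler_pM2l // ler_expR lerN2.
  by rewrite ler_pM2r // invr_gt0.
have key2 : forall m, (Gnorm (Gmat sigma_i N0 At) (vecc y - vecc (ys l))
       <= Gnorm (Gmat sigma_i N0 At) (vecc y - vecc (ys m))) =
   (Qf sigma_i N0 At y (ys l) <= Qf sigma_i N0 At y (ys m)).
  by move=> m; rewrite /Gnorm !quad_eq ler_sqrt.
by split => H m; [rewrite key2 -key; exact: H | rewrite key -key2; exact: H].
Qed.
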